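(* For $x_b,x_\theta\in\mathbb{R}$ let $$F(x_b,x_\theta)=\int_{\mathbb{R}}\frac{e^{(y+x_\theta)x_b}-e^{-(y+x_\theta)x_b}}{e^{(y+x_\theta)x_b}+e^{-(y+x_\theta)x_b}}\,(y+x_\theta)\,\phi(y)\,dy.$$ Then for each fixed $x_\theta$, $x_b\mapsto F(x_b,x_\theta)$ is concave on $x_b\ge0$; moreover (i) $F(0,x_\theta)=0$ and (ii) $F(x_\theta,x_\theta)=x_\theta$.
   Context: $\phi$ is the standard normal density. *)

(* Defs.v *)
From HB Require Import structures.
From mathcomp Require Import all_boot all_order all_algebra.
From mathcomp Require Import all_classical all_reals all_analysis.
Set Implicit Arguments. Unset Strict Implicit. Unset Printing Implicit Defensive.
Import Order.TTheory GRing.Theory Num.Theory.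
Import numFieldNormedType.Exports.
Local Open Scope classical_set_scope.
Local Open Scope ring_scope.

Definition phi {R : realType} (y : R) : R := normal_pdf 0 1 y.

Definition F {R : realType} (xb xt : R) : R :=
  \int[@lebesgue_measure R]_(y in [set: R])
    ((expR ((y + xt) * xb) - expR (- ((y + xt) * xb))) /
     (expR ((y + xt) * xb) + expR (- ((y + xt) * xb))) * (y + xt) * phi y).

Definition concave_on {R : realType} (D : set R) (f : R -> R) : Prop :=
  forall x y t, D x -> D y -> 0 <= t -> t <= 1 ->
    t * f x + (1 - t) * f y <= f (t * x + (1 - t) * y).

(* Main.v *)
Require Import Defs.
From HB Require Import structures.
From mathcomp Require Import all_boot all_order all_algebra.
From mathcomp Require Import all_classical all_reals all_analysis.
From mathcomp Require Import measurable_realfun ftc gauss_integral normal_distribution realfun convex exp. 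
From mathcomp Require Import ring lra.
Import Order.TTheory GRing.Theory Num.Theory.
Import numFieldNormedType.Exports.
Local Open Scope classical_set_scope.
Local Open Scope ring_scope.

Section S.
Context {R : realType}.
Local Notation mu := (@lebesgue_measure R).

Lemma splitT (H : R -> R) : continuous H -> (forall x, 0 <= H x) ->
  (\int[mu]_x (H x)%:E = \int[mu]_(x in `]-oo, 0%R]) (H x)%:E
     + \int[mu]_(x in `[0%R, +oo[) (H x)%:E)%E.
Proof.
move=> cH H0.
have mH : measurable_fun [set: R] H by exact: continuous_measurable_fun.
have -> : [set: R] = `]-oo, 0%R[ `|` `[0%R, +oo[.
  apply/seteqP; split => x //= _.
  by rewrite !in_itv /= andbT; case: (ltP x 0) => _; [left|right].
rewrite ge0_integral_setU //=; last 3 first.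
- by apply/measurable_EFinP; exact: measurable_funTS.
- by move=> x _; rewrite lee_fin.
- rewrite disj_set2E; apply/eqP; rewrite -subset0 => x [] /=.
  by rewrite !in_itv /= andbT => /lt_le_trans h /h; rewrite ltxx.
rewrite integral_itv_bndo_bndc //.
by apply/measurable_EFinP; exact: measurable_funTS.
Qed.

Lemma contN (G : R -> R) : continuous G -> continuous (fun x => G (- x)).
Proof. by move=> cG x; apply: continuous_comp; [exact: oppr_continuous|exact: cG]. Qed.

Lemma halfNy (H : R -> R) : continuous H -> (forall x, 0 <= H x) ->
  (\int[mu]_(x in `]-oo, 0%R]) (H x)%:E = \int[mu]_(x in `[0%R, +oo[) (H (- x))%:E)%E.
Proof.
move=> cH H0.
have := @ge0_integration_by_substitutionNy R H 0.
rewrite oppr0; apply.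
- exact: continuous_subspaceT.
- by move=> x _.
Qed.

Lemma refl_ge0 (G : R -> R) : continuous G -> (forall x, 0 <= G x) ->
  (\int[mu]_x (G (- x))%:E = \int[mu]_x (G x)%:E)%E.
Proof.
move=> cG G0.
rewrite (@splitT G cG G0) (@splitT (fun x => G (- x))) ?(contN cG) //.
rewrite (@halfNy G cG G0) (@halfNy (fun x => G (- x))) ?(contN cG) //.
  - under [X in (X + _)%E]eq_integral do rewrite opprK.
    by rewrite addeC.
  - exact: contN.
  - exact: contN.
Qed.

Lemma shift_ge0 (G : R -> R) (c : R) : continuous G -> (forall x, 0 <= G x) ->
  (\int[mu]_x (G (x + c))%:E = \int[mu]_x (G x)%:E)%E.
Proof.
move=> cG G0.
have D1 : (fun x : R => x + c)^`()%classic = cst 1.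
  by apply/funext => z; rewrite derive1E deriveD // derive_id derive_cst addr0.
rewrite (@increasing_ge0_integration_by_substitutionT _ (fun x => x + c) G) //.
- by apply: eq_integral => x _; rewrite D1 /= mulr1.
- by move=> x y; rewrite ltrD2r.
- by rewrite D1; exact: cst_continuous.
- by rewrite D1; exact: is_cvg_cst.
- by rewrite D1; exact: is_cvg_cst.
- exact: cvg_addrr_Ny.
- exact: cvg_addrr.
Qed.
Definition pp (f : R -> R) x := (f x + `|f x|) / 2.
Definition nn (f : R -> R) x := (`|f x| - f x) / 2.

Lemma pp_ge0 f x : 0 <= pp f x.
Proof. rewrite /pp; have [h|h] := leP 0 (f x); [rewrite ger0_norm //|rewrite ltr0_norm //]; lra. Qed.
Lemma nn_ge0 f x : 0 <= nn f x.
Proof. rewrite /nn; have [h|h] := leP 0 (f x); [rewrite ger0_norm //|rewrite ltr0_norm //]; lra. Qed.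

Lemma funepos_pp f : (fun x => (f x)%:E)^\+%E = (fun x => (pp f x)%:E).
Proof.
apply/funext => x; rewrite funeposE /pp -EFin_max; congr EFin.
have [h|h] := leP 0 (f x); [rewrite ger0_norm //|rewrite ltr0_norm //].
  by lra.
by lra.
Qed.
Lemma funeneg_nn f : (fun x => (f x)%:E)^\-%E = (fun x => (nn f x)%:E).
Proof.
apply/funext => x; rewrite funenegE /nn -EFin_max; congr EFin.
have [h|h] := leP 0 (f x); [rewrite ger0_norm //|rewrite ltr0_norm //].
  by rewrite max_r; lra.
by rewrite max_l; lra.
Qed.

Lemma cont_pp f : continuous f -> continuous (pp f).
Proof.
move=> cf x; rewrite /pp.
apply: cvgMl; apply: cvgD; first exact: cf.
apply: continuous_comp; [exact: cf | exact: norm_continuous].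
Qed.
Lemma cont_nn f : continuous f -> continuous (nn f).
Proof.
move=> cf x; rewrite /nn.
apply: cvgMl; apply: cvgB; last exact: cf.
apply: continuous_comp; [exact: cf | exact: norm_continuous].
Qed.

Lemma refl_int f : continuous f ->
  (\int[mu]_x (f (- x))%:E = \int[mu]_x (f x)%:E)%E.
Proof.
move=> cf; rewrite integralE [RHS]integralE.
rewrite (funepos_pp (fun x => f (- x))) (funeneg_nn (fun x => f (- x))).
rewrite funepos_pp funeneg_nn.
rewrite (@refl_ge0 (pp f)) ?(@refl_ge0 (nn f)) //.
- exact: cont_nn. - exact: nn_ge0. - exact: cont_pp. - exact: pp_ge0.
Qed.

Lemma shift_int f c : continuous f ->
  (\int[mu]_x (f (x + c))%:E = \int[mu]_x (f x)%:E)%E.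
Proof.
move=> cf; rewrite integralE [RHS]integralE.
rewrite (funepos_pp (fun x => f (x + c))) (funeneg_nn (fun x => f (x + c))).
rewrite funepos_pp funeneg_nn.
rewrite (@shift_ge0 (pp f)) ?(@shift_ge0 (nn f)) //.
- exact: cont_nn. - exact: nn_ge0. - exact: cont_pp. - exact: pp_ge0.
Qed.
Lemma odd_Rint (f : R -> R) : continuous f -> (forall x, f (- x) = - f x) ->
  \int[mu]_x f x = 0.
Proof.
move=> cf odf.
have h : (\int[mu]_x (- f x)%:E = \int[mu]_x (f x)%:E)%E.
  by rewrite -(@refl_int f cf); apply: eq_integral => x _; rewrite odf.
rewrite integralE [RHS]integralE in h.
rewrite (funepos_pp (fun x => - f x)) (funeneg_nn (fun x => - f x)) in h.
rewrite !funepos_pp !funeneg_nn in h.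
have e1 : pp (fun x => - f x) = nn f.
  by apply/funext => x; rewrite /pp /nn normrN addrC.
have e2 : nn (fun x => - f x) = pp f.
  by apply/funext => x; rewrite /pp /nn normrN opprK addrC.
rewrite e1 e2 in h.
rewrite /Rintegral integralE funepos_pp funeneg_nn.
have A0 : (0 <= \int[mu]_x (pp f x)%:E)%E.
  by apply: integral_ge0 => x _; rewrite lee_fin pp_ge0.
have B0 : (0 <= \int[mu]_x (nn f x)%:E)%E.
  by apply: integral_ge0 => x _; rewrite lee_fin nn_ge0.
move: h A0 B0.
case: (\int[mu]_x (pp f x)%:E)%E => [a| |]; case: (\int[mu]_x (nn f x)%:E)%E => [b| |] //=.
move=> [] h _ _; lra.
Qed.
End S.

Section S.
Context {R : realType}.
Definition sg (a : R) := (1 + expR a * expR a)^-1.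
Lemma hd1 (x : R) : is_derive x 1 (fun a => 1 + expR a * expR a) (expR x * expR x + expR x * expR x).
Proof.
have := is_deriveD (is_derive_cst (1:R) x 1) (is_deriveM (is_derive_expR x) (is_derive_expR x)).
move=> h.
have -> : (fun a : R => 1 + expR a * expR a) = (cst 1 + expR * expR) by apply/funext.
apply: is_derive_eq h _.
by rewrite add0r.
Qed.

Definition d1 (a : R) := - (2 * (expR a * expR a)) * (sg a * sg a).

Lemma sg_ne0 (x : R) : 1 + expR x * expR x != 0.
Proof. by rewrite gt_eqF // addr_gt0 // mulr_gt0 // expR_gt0. Qed.

Lemma hd_sg (x : R) : is_derive x 1 sg (d1 x).
Proof.
have h := @is_deriveV _ (fun a => 1 + expR a * expR a) x _ _ (sg_ne0 x) (hd1 x).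
rewrite /sg; apply: is_derive_eq h _.
rewrite /d1 /sg /GRing.scale /=. field. exact: sg_ne0.
Qed.

Definition d2 (a : R) := 4 * (expR a * expR a) * (sg a * sg a * sg a) * (expR a * expR a - 1).

Lemma hd_d1 (x : R) : is_derive x 1 d1 (d2 x).
Proof.
have h := is_deriveM (is_deriveM (is_derive_cst (-2 : R) x 1) (is_deriveM (is_derive_expR x) (is_derive_expR x)))
   (is_deriveM (hd_sg x) (hd_sg x)).
have -> : d1 = (cst (-2) * (expR * expR)) * (sg * sg).
  by apply/funext => a; rewrite /d1 !fctE /=; ring.
apply: is_derive_eq h _.
rewrite /d2 /d1 /sg /GRing.scale /=. rewrite !fctE /=. field. exact: sg_ne0.
Qed.

Lemma Dsg : 'D_1 sg = d1.
Proof. by apply/funext => x; case: (hd_sg x) => _ ->. Qed.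

Lemma d2_ge0 (x : R) : 0 <= x -> 0 <= d2 x.
Proof.
move=> x0; rewrite /d2 /sg.
have E1 : 1 <= expR x by rewrite -expR0 ler_expR.
apply: mulr_ge0; last by rewrite subr_ge0; nra.
apply: mulr_ge0; first by apply: mulr_ge0 => //; apply: mulr_ge0; exact: expR_ge0.
by rewrite !mulr_ge0 // invr_ge0 addr_ge0 // mulr_ge0 // expR_ge0.
Qed.

Lemma cont_sg : continuous (sg : R -> R).
Proof. by move=> x; apply/differentiable_continuous/derivable1_diffP; case: (hd_sg x). Qed.

Local Open Scope convex_scope.
Lemma sg_convex (a b : R^o) (t : {i01 R}) : 0 <= a -> a <= b ->
  (sg (a <| t |> b) : R^o) <= (sg a : R^o) <| t |> (sg b : R^o).
Proof.
move=> a0 ab; apply: second_derivative_convex => //.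
- move=> x /andP[ax xb]; rewrite Dsg; case: (hd_d1 x) => _ ->; apply: d2_ge0.
  exact: le_trans (ltW ax).
- exact/cvg_at_left_filter/cont_sg.
- exact/cvg_at_right_filter/cont_sg.
- by move=> z _; case: (hd_sg z).
- by move=> z _; rewrite Dsg; case: (hd_d1 z).
Qed.
Local Close Scope convex_scope.

Lemma sg_conv (a1 a2 t : R) : 0 <= a1 -> 0 <= a2 -> 0 <= t -> t <= 1 ->
  sg (t * a1 + (1 - t) * a2) <= t * sg a1 + (1 - t) * sg a2.
Proof.
move=> a10 a20 t0 t1.
have [a12|a21] := leP a1 a2.
  by have := @sg_convex a1 a2 (Itv01 t0 t1) a10 a12; rewrite !convRE.
have t0' : 0 <= 1 - t by lra.
have t1' : 1 - t <= 1 by lra.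
have := @sg_convex a2 a1 (Itv01 t0' t1') a20 (ltW a21); rewrite !convRE /=.
rewrite /unstable.onem (_ : 1 - (1 - t) = t); last by ring.
by rewrite (addrC (_ * a2)) (addrC (_ * sg a2)).
Qed.

Definition tnh (a : R) := (expR a - expR (- a)) / (expR a + expR (- a)).

Lemma TE a : tnh a = 1 - 2 * sg a.
Proof.
rewrite /tnh /sg expRN.
have e0 : expR a != 0 by rewrite gt_eqF // expR_gt0.
field; rewrite ?sg_ne0 //.
Qed.

Lemma T_conc (a1 a2 t : R) : 0 <= a1 -> 0 <= a2 -> 0 <= t -> t <= 1 ->
  t * tnh a1 + (1 - t) * tnh a2 <= tnh (t * a1 + (1 - t) * a2).
Proof.
move=> a10 a20 t0 t1; rewrite !TE.
have := @sg_conv a1 a2 t a10 a20 t0 t1; lra.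
Qed.

Lemma TN a : tnh (- a) = - tnh a.
Proof. by rewrite /tnh opprK -mulNr opprB; congr (_ * _^-1); rewrite addrC. Qed.

Lemma T0 : tnh 0 = 0.
Proof. by rewrite /tnh oppr0 subrr mul0r. Qed.

Lemma T_le1 a : `|tnh a| <= 1.
Proof.
rewrite /tnh normrM normfV.
have p1 := expR_gt0 a; have p2 := expR_gt0 (- a).
rewrite (gtr0_norm (addr_gt0 p1 p2)) ler_pdivrMr ?addr_gt0 // mul1r.
rewrite ler_norml; apply/andP; split; lra.
Qed.

End S.

Section S.
Context {R : realType}.
Local Notation mu := (@lebesgue_measure R).

Lemma phiE (y : R) : phi y = normal_peak 1 * expR (- (y ^+ 2) / 2).
Proof.
rewrite /phi normal_pdfE ?oner_neq0 // /normal_fun subr0 expr1n.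
by [].
Qed.

Lemma phi_ge0 (y : R) : 0 <= phi y.
Proof. exact: normal_pdf_ge0. Qed.

Lemma phiN (y : R) : phi (- y) = phi y.
Proof. by rewrite !phiE sqrrN. Qed.

Lemma cont_phi : continuous (@phi R).
Proof. exact: continuous_normal_pdf (oner_neq0 _). Qed.

Lemma int_phi : mu.-integrable setT (EFin \o (@phi R)).
Proof. exact: integrable_normal_pdf. Qed.

Lemma Rint_phi : \int[mu]_x (@phi R x) = 1.
Proof. by rewrite /Rintegral integral_normal_pdf. Qed.

Let s : R := Num.sqrt 2.
Let s0 : s != 0.
Proof. by rewrite /s gt_eqF // sqrtr_gt0. Qed.

Lemma abs_phi_le (y : R) :
  `|y| * phi y <= (normal_peak 1 / normal_peak s) * normal_pdf 0 s y.
Proof.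
rewrite phiE normal_pdfE // /normal_fun subr0 sqr_sqrtr // mulrA divfK; last first.
  by rewrite gt_eqF // normal_peak_gt0.
rewrite mulrCA ler_wpM2l ?normal_peak_ge0 //.
have -> : - y ^+ 2 / (2 *+ 2) = y ^+ 2 / 4 + (- y ^+ 2 / 2) by rewrite -mulr_natr; field.
rewrite expRD ler_wpM2r ?expR_ge0 //.
apply: le_trans (expR_ge1Dx _).
have : 0 <= (`|y| - 2) ^+ 2 by exact: sqr_ge0.
rewrite -[y ^+ 2]real_normK ?num_real //; nra.
Qed.

Lemma dom_int (g : R -> R) (a b : R) : 0 <= a -> 0 <= b -> measurable_fun setT g ->
  (forall y, `|g y| <= a * (`|y| * phi y) + b * phi y) ->
  mu.-integrable setT (EFin \o g).
Proof.
move=> a0 b0 mg hg.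
pose c := normal_peak 1 / normal_peak s.
have c0 : 0 <= c by rewrite /c divr_ge0 // normal_peak_ge0.
apply: (@le_integrable _ _ _ mu _ measurableT _
  (fun y => ((a * c) * normal_pdf 0 s y + b * normal_pdf 0 1 y)%:E)).
- exact/measurable_EFinP.
- move=> y _ /=; rewrite lee_fin.
  rewrite [X in _ <= X]ger0_norm; last first.
    apply: addr_ge0; apply: mulr_ge0 => //; [by rewrite mulr_ge0 | exact: normal_pdf_ge0 | exact: normal_pdf_ge0].
  apply: le_trans (hg y) _; rewrite lerD2r -mulrA ler_wpM2l //.
  exact: abs_phi_le.
- apply: (@eq_integrable _ _ _ mu _ measurableT
    ((fun y => (a * c)%:E * (normal_pdf 0 s y)%:E) \+ (fun y => b%:E * (normal_pdf 0 1 y)%:E))%E).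
    by move=> y _ /=; rewrite -!EFinM.
  by apply: integrableD => //; apply: integrableZl => //; exact: integrable_normal_pdf.
Qed.
End S.

Section S.
Context {R : realType}.
Local Notation mu := (@lebesgue_measure R).

Lemma cM (f g : R -> R) : continuous f -> continuous g -> continuous (fun x => f x * g x).
Proof. by move=> cf cg x; exact: (continuousM (cf x) (cg x)). Qed.
Lemma cDf (f g : R -> R) : continuous f -> continuous g -> continuous (fun x => f x + g x).
Proof. by move=> cf cg x; exact: (continuousD (cf x) (cg x)). Qed.
Lemma cCo (f g : R -> R) : continuous f -> continuous g -> continuous (fun x => f (g x)).
Proof. by move=> cf cg x; apply: continuous_comp; [exact: cg|exact: cf]. Qed.
Lemma cK (c : R) : continuous (fun _ : R => c).
Proof. by move=> x; exact: cvg_cst. Qed.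
Lemma cI : continuous (fun x : R => x).
Proof. by move=> x; exact: cvg_id. Qed.

Lemma cont_T : continuous (@tnh R).
Proof.
have -> : @tnh R = fun a => 1 + (-2) * sg a.
  by apply/funext => a; rewrite TE; ring.
apply: cDf; first exact: cK.
apply: cM; [exact: cK | exact: cont_sg].
Qed.

Definition hb (b x y : R) := tnh ((y + x) * b) * (y + x) * phi y.

Lemma FE b x : F b x = \int[mu]_y (hb b x y).
Proof. by []. Qed.

Lemma cont_hb b x : continuous (hb b x).
Proof.
rewrite /hb; apply: cM; last exact: cont_phi.
apply: cM; last by apply: cDf; [exact: cI|exact: cK].
apply: cCo; first exact: cont_T.
apply: cM; last exact: cK.
by apply: cDf; [exact: cI|exact: cK].
Qed.

Lemma int_hb b x : mu.-integrable setT (EFin \o hb b x).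
Proof.
apply: (@dom_int _ _ 1 `|x|) => //.
  exact: continuous_measurable_fun (cont_hb b x).
move=> y; rewrite /hb normrM (ger0_norm (phi_ge0 y)) mul1r -mulrDl.
rewrite ler_wpM2r ?phi_ge0 // normrM.
apply: le_trans (ler_normD _ _).
rewrite -[X in _ <= X]mul1r ler_wpM2r //; exact: T_le1.
Qed.

Lemma int_scale (k : R) (f : R -> R) : mu.-integrable setT (EFin \o f) ->
  mu.-integrable setT (EFin \o (fun y => k * f y)).
Proof.
move=> h; apply: (@eq_integrable _ _ _ mu _ measurableT (fun y => k%:E * (f y)%:E)%E).
  by move=> y _; rewrite /= EFinM.
exact: integrableZl.
Qed.

Lemma gabs (z b : R) : tnh (z * b) * z = tnh (`|z| * b) * `|z|.
Proof.
have [z0|z0] := leP 0 z; first by rewrite ger0_norm.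
rewrite ltr0_norm // mulNr TN; ring.
Qed.

Lemma pt_conc (b1 b2 t x y : R) : 0 <= b1 -> 0 <= b2 -> 0 <= t -> t <= 1 ->
  t * hb b1 x y + (1 - t) * hb b2 x y <= hb (t * b1 + (1 - t) * b2) x y.
Proof.
move=> b10 b20 t0 t1; rewrite /hb.
set z := y + x; set p := phi y.
have E : t * (tnh (z * b1) * z * p) + (1 - t) * (tnh (z * b2) * z * p) =
  (t * (tnh (z * b1) * z) + (1 - t) * (tnh (z * b2) * z)) * p by ring.
rewrite E ler_wpM2r ?phi_ge0 // (gabs z b1) (gabs z b2) (gabs z (t * b1 + (1 - t) * b2)).
have E2 : t * (tnh (`|z| * b1) * `|z|) + (1 - t) * (tnh (`|z| * b2) * `|z|) =
  (t * tnh (`|z| * b1) + (1 - t) * tnh (`|z| * b2)) * `|z| by ring.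
rewrite E2 ler_wpM2r //.
have := @T_conc R (`|z| * b1) (`|z| * b2) t.
rewrite !mulr_ge0 // => /(_ isT isT t0 t1).
by rewrite (_ : t * (`|z| * b1) + (1 - t) * (`|z| * b2) = `|z| * (t * b1 + (1 - t) * b2)) //; ring.
Qed.

Lemma int_add (f g : R -> R) : mu.-integrable setT (EFin \o f) ->
  mu.-integrable setT (EFin \o g) ->
  mu.-integrable setT (EFin \o (fun y => f y + g y)).
Proof.
move=> hf hg; apply: (@eq_integrable _ _ _ mu _ measurableT ((EFin \o f) \+ (EFin \o g))%E).
  by move=> y _; rewrite /= EFinD.
exact: integrableD.
Qed.

Lemma concF x : concave_on [set xb : R | 0 <= xb] (fun xb => F xb x).
Proof.
move=> b1 b2 t /= b10 b20 t0 t1.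
rewrite !FE -!RintegralZl //; try exact: int_hb.
rewrite -RintegralD //; try exact: int_scale (int_hb _ _).
apply: le_Rintegral => //.
- by apply: int_add; exact: int_scale (int_hb _ _).
- exact: int_hb.
- by move=> y _; exact: pt_conc.
Qed.

Lemma F0 (x : R) : F 0 x = 0.
Proof.
rewrite FE (@eq_Rintegral _ _ _ mu setT (fun _ => 0)).
  by rewrite Rintegral_cst // mul0r.
by move=> y _; rewrite /hb mulr0 T0 !mul0r.
Qed.

Definition kf (x u : R) := (tnh (u * x) - 1) * u * phi (u - x).

Lemma cont_kf x : continuous (kf x).
Proof.
rewrite /kf; apply: cM; last by apply: cCo; [exact: cont_phi | apply: cDf; [exact: cI|exact: cK]].
apply: cM; last exact: cI.
apply: cDf; last exact: cK.
apply: cCo; first exact: cont_T.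
by apply: cM; [exact: cI|exact: cK].
Qed.

Lemma kf_odd x u : kf x (- u) = - kf x u.
Proof.
rewrite /kf mulNr TN -[- u - x]opprD phiN.
have hkey : expR (u * x) * expR (u * x) * phi (u + x) = phi (u - x).
  rewrite !phiE -expRD mulrCA -expRD; congr (_ * expR _).
  by field.
rewrite -hkey !TE /sg.
have ne := @sg_ne0 R (u * x).
field => //.
Qed.

Lemma Fxx (x : R) : F x x = x.
Proof.
have sp y : hb x x y = (y + x) * phi y + kf x (y + x).
  by rewrite /hb /kf addrK; ring.
rewrite FE; under eq_Rintegral do rewrite sp.
have i1 : mu.-integrable setT (EFin \o (fun y => (y + x) * phi y)).
  apply: (@dom_int _ _ 1 `|x|) => //.
    apply: continuous_measurable_fun; apply: cM; [apply: cDf; [exact: cI|exact: cK]|exact: cont_phi].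
  move=> y; rewrite normrM (ger0_norm (phi_ge0 y)) mul1r -mulrDl.
  by rewrite ler_wpM2r ?phi_ge0 // ler_normD.
have i2 : mu.-integrable setT (EFin \o (fun y => kf x (y + x))).
  apply: (@dom_int _ _ 2 (2 * `|x|)) => //.
    apply: continuous_measurable_fun; apply: cCo; [exact: cont_kf|apply: cDf; [exact: cI|exact: cK]].
  move=> y; rewrite /kf addrK normrM (ger0_norm (phi_ge0 y)) normrM.
  rewrite mulrA -mulrDl -mulrDr ler_wpM2r ?phi_ge0 //.
  apply: le_trans (_ : 2 * `|y + x| <= _); last by rewrite ler_wpM2l // ler_normD.
  rewrite ler_wpM2r //; apply: le_trans (ler_normB _ _) _.
  by have := @T_le1 R ((y + x) * x); rewrite normr1; lra.
rewrite RintegralD //.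
under eq_Rintegral do rewrite mulrDl.
have i3 : mu.-integrable setT (EFin \o (fun y => y * phi y)).
  apply: (@dom_int _ _ 1 0) => //.
    apply: continuous_measurable_fun; apply: cM; [exact: cI|exact: cont_phi].
  by move=> y; rewrite normrM (ger0_norm (phi_ge0 y)) mul1r mul0r addr0.
rewrite RintegralD //; last exact: int_scale int_phi.
rewrite RintegralZl //; last exact: int_phi.
rewrite Rint_phi mulr1.
have -> : \int[mu]_y (y * phi y) = 0.
  apply: odd_Rint; first by apply: cM; [exact: cI|exact: cont_phi].
  by move=> y; rewrite phiN mulNr.
have -> : \int[mu]_y kf x (y + x) = \int[mu]_y kf x y.
  by rewrite /Rintegral (@shift_int R (kf x) x (cont_kf x)).
rewrite odd_Rint; [by rewrite add0r addr0 | exact: cont_kf | exact: kf_odd].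
Qed.

End S.


Theorem lemma19 (R : realType) (xt : R) :
  concave_on [set xb : R | 0 <= xb] (fun xb => F xb xt) /\
  F 0 xt = 0 /\ F xt xt = xt.
Proof. split; [exact: concF | split; [exact: F0 | exact: Fxx]]. Qed.
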